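(* For the unstructured search problem with marked set $M$, $1\le |M|<2^n$, $$\dim(\mathfrak g_{\mathrm{QWOA,Search}})=\begin{cases}4,& |M|=1,\\ 5,&\text{otherwise.}\end{cases}$$
   Context: Unstructured search: solution space $\mathcal S=\{0,1\}^n$, cost $C:\mathcal S\to\{0,1\}$, marked set $M=\{z:C(z)=1\}$. $H_C$ is the diagonal matrix with $H_C|z\rangle=C(z)|z\rangle$ (projector onto marked basis states); $H_M$ is the $2^n\times 2^n$ all-ones matrix. $\mathfrak g_{\mathrm{QWOA,Search}}$ is the real Lie algebra generated by $iH_C$ and $iH_M$, i.e. the smallest real linear subspace of $2^n\times 2^n$ complex matrices containing them and closed under the commutator $[A,B]=AB-BA$; its dimension is its real dimension. *)

(* Defs.v *)
From HB Require Import structures.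
From mathcomp Require Import all_boot all_order all_algebra.
From mathcomp Require Import complex.
Set Implicit Arguments. Unset Strict Implicit. Unset Printing Implicit Defensive.
Import Order.TTheory GRing.Theory Num.Theory.
Local Open Scope ring_scope.

Section LieDefs.
Variable R : rcfType.
Variable N : nat.
Local Notation M := 'M[R[i]]_N.

Definition commutator (A B : M) : M := A *m B - B *m A.

Definition rscale (r : R) (A : M) : M := (Complex r 0) *: A.

Definition real_lie_subalgebra (S : M -> Prop) : Prop :=
  [/\ S 0,
      (forall A B, S A -> S B -> S (A + B)),
      (forall (r : R) A, S A -> S (rscale r A)) &
      (forall A B, S A -> S B -> S (commutator A B))].

Definition lie_generated (gens : seq M) (X : M) : Prop :=
  forall S : M -> Prop, real_lie_subalgebra S ->
    (forall G, G \in gens -> S G) -> S X.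

Definition rcomb (d : nat) (c : 'I_d -> R) (b : 'I_d -> M) : M :=
  \sum_(k < d) rscale (c k) (b k).

Definition real_dim_eq (S : M -> Prop) (d : nat) : Prop :=
  exists b : 'I_d -> M,
    [/\ (forall k, S (b k)),
        (forall c : 'I_d -> R, rcomb c b = 0 -> forall k, c k = 0) &
        (forall X, S X -> exists c : 'I_d -> R, X = rcomb c b)].

End LieDefs.

(* Unstructured search on n qubits: the solution space {0,1}^n is
   encoded as 'I_(2^n) (bit strings <-> their binary value). *)
Unset Implicit Arguments.
Definition imag_unit (R : rcfType) : R[i] := Complex 0 1.

Definition H_C (R : rcfType) (n : nat) (Mk : {set 'I_(2 ^ n)}) : 'M[R[i]]_(2 ^ n) :=
  \matrix_(i, j) (if (i == j) && (i \in Mk) then 1 else 0).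

Definition H_M (R : rcfType) (n : nat) : 'M[R[i]]_(2 ^ n) :=
  \matrix_(i, j) 1.

Definition g_QWOA_Search (R : rcfType) (n : nat) (Mk : {set 'I_(2 ^ n)}) :
  'M[R[i]]_(2 ^ n) -> Prop :=
  lie_generated [:: imag_unit R *: H_C R n Mk; imag_unit R *: H_M R n].

(* Main.v *)
Require Import Defs.
From HB Require Import structures.
From mathcomp Require Import all_boot all_order all_algebra.
From mathcomp Require Import complex.
From mathcomp Require Import ring lra zify.
Set Implicit Arguments. Unset Strict Implicit. Unset Printing Implicit Defensive.
Import Order.TTheory GRing.Theory Num.Theory.
Local Open Scope ring_scope.
Local Open Scope complex_scope.
Notation iu := (Complex 0 1).



Lemma mulii (R : rcfType) : iu * iu = -1 :> R[i].
Proof. by rewrite -expr2 sqr_i. Qed.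




Definition mk (R : rcfType) (n : nat) (Mk : {set 'I_(2 ^ n)}) (a b c d e : R[i]) : 'M[R[i]]_(2^n) :=
  \matrix_(i, j) if i \in Mk then (if j \in Mk then a + (i == j)%:R * e else c)
                 else (if j \in Mk then d else b).

Lemma sum_deltaL (R : rcfType) (n : nat) (Mk : {set 'I_(2 ^ n)}) (i : 'I_(2^n)) (F : 'I_(2^n) -> R[i]) :
  i \in Mk -> \sum_(l | l \in Mk) (i == l)%:R * F l = F i.
Proof.
move=> Hi; rewrite (bigD1 i) //= eqxx mul1r big1 ?addr0 // => l /andP[_ Hl].
by rewrite eq_sym (negbTE Hl) mul0r.
Qed.

Lemma sum_deltaR (R : rcfType) (n : nat) (Mk : {set 'I_(2 ^ n)}) (j : 'I_(2^n)) (F : 'I_(2^n) -> R[i]) :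
  j \in Mk -> \sum_(l | l \in Mk) (l == j)%:R * F l = F j.
Proof.
move=> Hj; rewrite -(sum_deltaL F Hj); apply: eq_bigr => l _; by rewrite eq_sym.
Qed.

Lemma sum_cM (R : rcfType) (n : nat) (Mk : {set 'I_(2 ^ n)}) (x : R[i]) :
  \sum_(l | l \in Mk) x = #|Mk|%:R * x.
Proof. by rewrite sumr_const mulr_natl. Qed.

Lemma sum_cC (R : rcfType) (n : nat) (Mk : {set 'I_(2 ^ n)}) (x : R[i]) :
  \sum_(l | l \notin Mk) x = #|~: Mk|%:R * x.
Proof. rewrite sumr_const mulr_natl; congr (_ *+ _); apply: eq_card => l; by rewrite !inE. Qed.


Lemma mk_mul (R : rcfType) (n : nat) (Mk : {set 'I_(2 ^ n)}) (a b c d e a' b' c' d' e' : R[i]) :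
  let m := (#|Mk|%:R : R[i]) in let k := (#|~: Mk|%:R : R[i]) in
  mk Mk a b c d e *m mk Mk a' b' c' d' e' =
  mk Mk (m*a*a' + a*e' + e*a' + k*c*d') (m*d*c' + k*b*b')
        (m*a*c' + e*c' + k*c*b') (m*d*a' + d*e' + k*b*d') (e*e').
Proof.
move=> m k; apply/matrixP => i j; rewrite !mxE (bigID (fun l => l \in Mk)) /=.
case Hi: (i \in Mk); case Hj: (j \in Mk).
- rewrite (eq_bigr (fun l => a * a' + (i == l)%:R * (e * a') + (l == j)%:R * (a * e')
      + (i == l)%:R * ((l == j)%:R * (e * e')))); last first.
    by move=> l Hl; rewrite !mxE Hi Hj Hl; ring.
  rewrite [X in _ + X](eq_bigr (fun l => c * d')); last first.
    by move=> l Hl; rewrite !mxE Hi Hj (negbTE Hl).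
  rewrite !big_split /= sum_deltaL // sum_deltaR // sum_deltaL // sum_cM sum_cC -/m -/k.
  ring.
- rewrite (eq_bigr (fun l => a * c' + (i == l)%:R * (e * c'))); last first.
    by move=> l Hl; rewrite !mxE Hi Hj Hl; ring.
  rewrite [X in _ + X](eq_bigr (fun l => c * b')); last first.
    by move=> l Hl; rewrite !mxE Hi Hj (negbTE Hl).
  rewrite !big_split /= sum_deltaL // sum_cM sum_cC -/m -/k.
  ring.
- rewrite (eq_bigr (fun l => d * a' + (l == j)%:R * (d * e'))); last first.
    by move=> l Hl; rewrite !mxE Hi Hj Hl; ring.
  rewrite [X in _ + X](eq_bigr (fun l => b * d')); last first.
    by move=> l Hl; rewrite !mxE Hi Hj (negbTE Hl).
  rewrite !big_split /= sum_deltaR // sum_cM sum_cC -/m -/k.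
  ring.
- rewrite (eq_bigr (fun l => d * c')); last first.
    by move=> l Hl; rewrite !mxE Hi Hj Hl.
  rewrite [X in _ + X](eq_bigr (fun l => b * b')); last first.
    by move=> l Hl; rewrite !mxE Hi Hj (negbTE Hl).
  rewrite sum_cM sum_cC -/m -/k.
  ring.
Qed.


Lemma mkD (R : rcfType) (n : nat) (Mk : {set 'I_(2 ^ n)}) (a b c d e a' b' c' d' e' : R[i]) :
  mk Mk a b c d e + mk Mk a' b' c' d' e' = mk Mk (a+a') (b+b') (c+c') (d+d') (e+e').
Proof.
apply/matrixP => i j; rewrite !mxE.
by case: (i \in Mk); case: (j \in Mk); rewrite //; ring.
Qed.

Lemma mkB (R : rcfType) (n : nat) (Mk : {set 'I_(2 ^ n)}) (a b c d e a' b' c' d' e' : R[i]) :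
  mk Mk a b c d e - mk Mk a' b' c' d' e' = mk Mk (a-a') (b-b') (c-c') (d-d') (e-e').
Proof.
apply/matrixP => i j; rewrite !mxE.
by case: (i \in Mk); case: (j \in Mk); rewrite //; ring.
Qed.

Lemma mkZ (R : rcfType) (n : nat) (Mk : {set 'I_(2 ^ n)}) (z a b c d e : R[i]) :
  z *: mk Mk a b c d e = mk Mk (z*a) (z*b) (z*c) (z*d) (z*e).
Proof.
apply/matrixP => i j; rewrite !mxE.
by case: (i \in Mk); case: (j \in Mk); rewrite //; ring.
Qed.

Lemma mk0 (R : rcfType) (n : nat) (Mk : {set 'I_(2 ^ n)}) :
  mk Mk 0 0 0 0 0 = 0 :> 'M[R[i]]_(2^n).
Proof.
apply/matrixP => i j; rewrite !mxE.
by case: (i \in Mk); case: (j \in Mk); rewrite // mulr0 addr0.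
Qed.

Lemma mk_comm (R : rcfType) (n : nat) (Mk : {set 'I_(2 ^ n)}) (a b c d e a' b' c' d' e' : R[i]) :
  let m := (#|Mk|%:R : R[i]) in let k := (#|~: Mk|%:R : R[i]) in
  commutator (mk Mk a b c d e) (mk Mk a' b' c' d' e') =
  mk Mk (k*(c*d' - c'*d)) (m*(d*c' - d'*c))
        (m*(a*c' - a'*c) + (e*c' - e'*c) + k*(c*b' - c'*b))
        (m*(d*a' - d'*a) + (d*e' - d'*e) + k*(b*d' - b'*d)) 0.
Proof.
move=> m k; rewrite /commutator !mk_mul mkB -/m -/k.
congr mk; ring.
Qed.

Lemma cjD (R : rcfType) (x y : R[i]) : conjc (x + y) = conjc x + conjc y.
Proof. exact: rmorphD. Qed.
Lemma cjB (R : rcfType) (x y : R[i]) : conjc (x - y) = conjc x - conjc y.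
Proof. exact: rmorphB. Qed.
Lemma cjM (R : rcfType) (x y : R[i]) : conjc (x * y) = conjc x * conjc y.
Proof. exact: rmorphM. Qed.
Lemma cjN (R : rcfType) (x : R[i]) : conjc (- x) = - conjc x.
Proof. exact: rmorphN. Qed.
Lemma cjn (R : rcfType) (p : nat) : conjc (p%:R : R[i]) = p%:R.
Proof. exact: conjc_nat. Qed.
Lemma cj0 (R : rcfType) : conjc (0 : R[i]) = 0.
Proof. exact: conjc0. Qed.
Lemma cjK (R : rcfType) (x : R[i]) : conjc (conjc x) = x.
Proof. exact: conjcK. Qed.
Lemma cjr (R : rcfType) (r : R) : conjc (Complex r 0) = Complex r 0.
Proof. by apply/eqP; rewrite eq_complex /= oppr0 !eqxx. Qed.

Definition inS (R : rcfType) (n : nat) (Mk : {set 'I_(2 ^ n)}) (X : 'M[R[i]]_(2^n)) : Prop :=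
  exists a b c d e, X = mk Mk a b c d e /\
    [/\ conjc a = -a, conjc b = -b, conjc e = -e & d = - conjc c].

Lemma inS_lie (R : rcfType) (n : nat) (Mk : {set 'I_(2 ^ n)}) :
  real_lie_subalgebra (@inS R n Mk).
Proof.
split.
- exists 0, 0, 0, 0, 0; split; first by rewrite mk0.
  by split; rewrite cj0 oppr0.
- move=> A B [a [b [c [d [e [-> [Ha Hb He Hd]]]]]]]
    [a' [b' [c' [d' [e' [-> [Ha' Hb' He' Hd']]]]]]].
  exists (a+a'), (b+b'), (c+c'), (d+d'), (e+e'); split; first by rewrite mkD.
  subst d d'.
  split; rewrite ?cjD ?Ha ?Hb ?He ?Ha' ?Hb' ?He' //; ring.
- move=> r A [a [b [c [d [e [-> [Ha Hb He Hd]]]]]]].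
  rewrite /rscale mkZ.
  do 5 eexists; split; first by reflexivity.
  subst d.
  split; rewrite ?cjM ?cjr ?Ha ?Hb ?He //; ring.
- move=> A B [a [b [c [d [e [-> [Ha Hb He Hd]]]]]]]
    [a' [b' [c' [d' [e' [-> [Ha' Hb' He' Hd']]]]]]].
  rewrite mk_comm.
  do 5 eexists; split; first by reflexivity.
  subst d d'.
  split; rewrite ?(cj0, oppr0, cjD, cjB, cjM, cjN, cjn, Ha, Hb, He, Ha', Hb', He', cjK) //; ring.
Qed.


Lemma cplx0 (R : rcfType) (x y : R) : x%:C + iu * y%:C = 0 -> x = 0 /\ y = 0.
Proof.
move/eqP; rewrite eq_complex /= => /andP[/eqP h1 /eqP h2].
split; [move: h1 | move: h2]; rewrite !mul0r !mul1r ?subr0 ?addr0 ?add0r //.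
Qed.

Lemma iP_mk (R : rcfType) (n : nat) (Mk : {set 'I_(2 ^ n)}) :
  imag_unit R *: H_C R n Mk = mk Mk 0 0 0 0 iu.
Proof.
apply/matrixP => i j; rewrite !mxE.
case Hi: (i \in Mk); case Hj: (j \in Mk); rewrite ?andbT ?andbF ?mulr0 //.
- by case: eqP => _; rewrite ?mulr1 ?mul1r ?mul0r ?mulr0 ?add0r.
- by case: eqP => [e|]; rewrite ?mulr0 //; move: Hi Hj; rewrite e => ->.
Qed.

Lemma iJ_mk (R : rcfType) (n : nat) (Mk : {set 'I_(2 ^ n)}) :
  imag_unit R *: H_M R n = mk Mk iu iu iu iu 0.
Proof.
apply/matrixP => i j; rewrite !mxE.
by case Hi: (i \in Mk); case Hj: (j \in Mk); rewrite ?mulr0 ?addr0 mulr1.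
Qed.

Lemma g_add (R : rcfType) (N : nat) (gens : seq 'M[R[i]]_N) A B :
  lie_generated gens A -> lie_generated gens B -> lie_generated gens (A + B).
Proof. move=> hA hB S hS hg; case: (hS) => _ h _ _; exact: h (hA S hS hg) (hB S hS hg). Qed.
Lemma g_scale (R : rcfType) (N : nat) (gens : seq 'M[R[i]]_N) r A :
  lie_generated gens A -> lie_generated gens (rscale r A).
Proof. move=> hA S hS hg; case: (hS) => _ _ h _; exact: h (hA S hS hg). Qed.
Lemma g_comm (R : rcfType) (N : nat) (gens : seq 'M[R[i]]_N) A B :
  lie_generated gens A -> lie_generated gens B -> lie_generated gens (commutator A B).
Proof. move=> hA hB S hS hg; case: (hS) => _ _ _ h; exact: h (hA S hS hg) (hB S hS hg). Qed.
Lemma g_gen (R : rcfType) (N : nat) (gens : seq 'M[R[i]]_N) A :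
  A \in gens -> lie_generated gens A.
Proof. by move=> hA S hS hg; apply: hg. Qed.

Lemma g_sub_S (R : rcfType) (n : nat) (Mk : {set 'I_(2 ^ n)}) X :
  g_QWOA_Search R n Mk X -> inS Mk X.
Proof.
move=> h; apply: h; first exact: inS_lie.
move=> G; rewrite !inE => /orP[/eqP->|/eqP->].
- rewrite iP_mk; exists 0, 0, 0, 0, iu; split => //.
  by split; rewrite ?cj0 ?oppr0 //; apply/eqP; rewrite eq_complex /= ?oppr0 !eqxx.
- rewrite (@iJ_mk _ _ Mk); exists iu, iu, iu, iu, 0; split => //.
  by split; rewrite ?cj0 ?oppr0 //; apply/eqP; rewrite eq_complex /= ?oppr0 ?opprK !eqxx.
Qed.


Lemma gP (R : rcfType) (n : nat) (Mk : {set 'I_(2 ^ n)}) :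
  g_QWOA_Search R n Mk (mk Mk 0 0 0 0 iu).
Proof. rewrite -iP_mk; apply: g_gen; by rewrite inE eqxx. Qed.

Lemma gJ (R : rcfType) (n : nat) (Mk : {set 'I_(2 ^ n)}) :
  g_QWOA_Search R n Mk (mk Mk iu iu iu iu 0).
Proof. rewrite -(@iJ_mk _ _ Mk); apply: g_gen; by rewrite !inE eqxx orbT. Qed.

Lemma gX1 (R : rcfType) (n : nat) (Mk : {set 'I_(2 ^ n)}) :
  g_QWOA_Search R n Mk (mk Mk 0 0 (-1) 1 0).
Proof.
have e : commutator (mk Mk 0 0 0 0 iu) (mk Mk iu iu iu iu 0) = mk Mk 0 0 (-1) 1 0 :> 'M[R[i]]_(2^n).
  have h := mulii R.
  rewrite mk_comm; congr mk; rewrite ?(mul0r, mulr0, subr0, sub0r, addr0, add0r, subrr, oppr0) ?h ?opprK ?(mul0r, mulr0, subr0, sub0r, addr0, add0r, subrr, oppr0) //.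
rewrite -e; apply: g_comm; [exact: gP | exact: gJ].
Qed.

Lemma gX2 (R : rcfType) (n : nat) (Mk : {set 'I_(2 ^ n)}) :
  g_QWOA_Search R n Mk (mk Mk 0 0 (-iu) (-iu) 0).
Proof.
have e : commutator (mk Mk 0 0 0 0 iu) (mk Mk 0 0 (-1) 1 0) = mk Mk 0 0 (-iu) (-iu) 0 :> 'M[R[i]]_(2^n).
  rewrite mk_comm; congr mk; ring.
rewrite -e; apply: g_comm; [exact: gP | exact: gX1].
Qed.

Lemma gX3 (R : rcfType) (n : nat) (Mk : {set 'I_(2 ^ n)}) :
  let m := (#|Mk|%:R : R[i]) in let k := (#|~: Mk|%:R : R[i]) in
  g_QWOA_Search R n Mk (mk Mk (2 * k * iu) (- (2 * m * iu)) ((k - m) * iu) ((k - m) * iu) 0).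
Proof.
move=> m k.
have e : commutator (mk Mk iu iu iu iu 0) (mk Mk 0 0 (-1) 1 0) =
   mk Mk (2 * k * iu) (- (2 * m * iu)) ((k - m) * iu) ((k - m) * iu) 0.
  rewrite mk_comm -/m -/k; congr mk; ring.
rewrite -e; apply: g_comm; [exact: gJ | exact: gX1].
Qed.

Lemma cr (R : rcfType) (r : R) : Complex r 0 = r%:C. Proof. by []. Qed.

Lemma gb0 (R : rcfType) (n : nat) (Mk : {set 'I_(2 ^ n)}) :
  g_QWOA_Search R n Mk (mk Mk iu 0 0 0 0).
Proof.
set m := #|Mk|; set k := #|~: Mk|; set N := (2 ^ n)%N.
have hN : (m%:R + k%:R = N%:R :> R[i]).
  by rewrite -natrD /m /k cardsC card_ord.
have hN0 : (N%:R : R[i]) != 0 by rewrite pnatr_eq0 /N expn_eq0.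
have e : rscale (m%:R / N%:R) (mk Mk iu iu iu iu 0) +
         rscale (1 / (2 * N%:R)) (mk Mk (2 * k%:R * iu) (- (2 * m%:R * iu)) ((k%:R - m%:R) * iu) ((k%:R - m%:R) * iu) 0)
       + rscale (1 / 2) (mk Mk 0 0 (-iu) (-iu) 0) = mk Mk iu 0 0 0 0 :> 'M[R[i]]_(2^n).
  rewrite /rscale !mkZ !mkD !cr !fmorph_div !rmorphM !rmorph_nat rmorph1.
  have h2 : (2 : R[i]) != 0 by rewrite pnatr_eq0.
  have key1 : forall z : R[i], m%:R / N%:R * z + 1 / (2 * N%:R) * (2 * k%:R * z) + 1 / 2 * 0 = z.
    by move=> z; rewrite -hN in hN0 *; field; rewrite ?mulf_neq0.
  have key2 : forall z : R[i], m%:R / N%:R * z + 1 / (2 * N%:R) * - (2 * m%:R * z) + 1 / 2 * 0 = 0.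
    by move=> z; rewrite -hN in hN0 *; field; rewrite ?mulf_neq0.
  have key3 : forall z : R[i], m%:R / N%:R * z + 1 / (2 * N%:R) * ((k%:R - m%:R) * z) + 1 / 2 * - z = 0.
    by move=> z; rewrite -hN in hN0 *; field; rewrite ?mulf_neq0.
  congr mk; [apply: key1 | apply: key2 | apply: key3 | apply: key3 | ring].
rewrite -e; apply: g_add; first apply: g_add; apply: g_scale; [exact: gJ | exact: gX3 | exact: gX2].
Qed.


Lemma gb1 (R : rcfType) (n : nat) (Mk : {set 'I_(2 ^ n)}) :
  g_QWOA_Search R n Mk (mk Mk 0 iu 0 0 0).
Proof.
have e : mk Mk iu iu iu iu 0 + rscale (-1) (mk Mk iu 0 0 0 0) + mk Mk 0 0 (-iu) (-iu) 0
   = mk Mk 0 iu 0 0 0 :> 'M[R[i]]_(2^n).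
  by rewrite /rscale !mkZ !mkD; congr mk; apply/eqP; rewrite eq_complex /= ?eqxx //=;
   apply/andP; split; apply/eqP; ring.
rewrite -e; apply: g_add; first apply: g_add.
- exact: gJ.
- apply: g_scale; exact: gb0.
- exact: gX2.
Qed.

Lemma gb2 (R : rcfType) (n : nat) (Mk : {set 'I_(2 ^ n)}) :
  g_QWOA_Search R n Mk (mk Mk 0 0 iu iu 0).
Proof.
have e : rscale (-1) (mk Mk 0 0 (-iu) (-iu) 0) = mk Mk 0 0 iu iu 0 :> 'M[R[i]]_(2^n).
  by rewrite /rscale !mkZ; congr mk; apply/eqP; rewrite eq_complex /= ?eqxx //=;
   apply/andP; split; apply/eqP; ring.
rewrite -e; apply: g_scale; exact: gX2.
Qed.

Lemma cz (R : rcfType) (p q : R) : Complex p q = 0 -> p = 0 /\ q = 0.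
Proof. by move/eqP; rewrite eq_complex /= => /andP[/eqP -> /eqP ->]. Qed.

Lemma mk_zero (R : rcfType) (n : nat) (Mk : {set 'I_(2 ^ n)}) (a b c d e : R[i]) x z :
  mk Mk a b c d e = 0 -> x \in Mk -> z \notin Mk -> [/\ a + e = 0, b = 0, c = 0 & d = 0].
Proof.
rewrite -(@mk0 R n Mk) => H Hx Hz.
have h1 := congr1 (fun X : 'M[R[i]]_(2^n) => X x x) H; have h2 := congr1 (fun X : 'M[R[i]]_(2^n) => X z z) H;
have h3 := congr1 (fun X : 'M[R[i]]_(2^n) => X x z) H; have h4 := congr1 (fun X : 'M[R[i]]_(2^n) => X z x) H.
move: h1 h2 h3 h4; rewrite /= !mxE Hx (negbTE Hz) eqxx mul1r mulr0 addr0 => -> -> -> ->.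
by [].
Qed.

Lemma mk_zero2 (R : rcfType) (n : nat) (Mk : {set 'I_(2 ^ n)}) (a b c d e : R[i]) x y :
  mk Mk a b c d e = 0 -> x \in Mk -> y \in Mk -> x != y -> a = 0.
Proof.
rewrite -(@mk0 R n Mk) => H Hx Hy Hxy.
have := congr1 (fun X : 'M[R[i]]_(2^n) => X x y) H; rewrite /= !mxE Hx Hy (negbTE Hxy) /= ?(mul0r, addr0, mulr0) => ->.
by [].
Qed.

Lemma mk_m1 (R : rcfType) (n : nat) (Mk : {set 'I_(2 ^ n)}) (a b c d e : R[i]) :
  #|Mk| = 1%N -> mk Mk a b c d e = mk Mk (a + e) b c d 0.
Proof.
move/eqP/cards1P => [x Hx]; apply/matrixP => i j; rewrite !mxE Hx !inE.
case: eqP => Hi; case: eqP => Hj //; subst; rewrite ?eqxx ?mul1r ?mulr0 ?addr0 //.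
Qed.


Definition bas5 (R : rcfType) (n : nat) (Mk : {set 'I_(2 ^ n)}) (k : 'I_5) : 'M[R[i]]_(2^n) :=
  match val k with
  | 0 => mk Mk iu 0 0 0 0 | 1 => mk Mk 0 iu 0 0 0 | 2 => mk Mk 0 0 iu iu 0
  | 3 => mk Mk 0 0 (-1) 1 0 | _ => mk Mk 0 0 0 0 iu end.

Definition bas4 (R : rcfType) (n : nat) (Mk : {set 'I_(2 ^ n)}) (k : 'I_4) : 'M[R[i]]_(2^n) :=
  match val k with
  | 0 => mk Mk iu 0 0 0 0 | 1 => mk Mk 0 iu 0 0 0 | 2 => mk Mk 0 0 iu iu 0
  | _ => mk Mk 0 0 (-1) 1 0 end.

Lemma rcomb5 (R : rcfType) (n : nat) (Mk : {set 'I_(2 ^ n)}) (c : 'I_5 -> R) :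
  rcomb c (@bas5 R n Mk) = mk Mk (Complex 0 (c (inord 0))) (Complex 0 (c (inord 1)))
     (Complex (- c (inord 3)) (c (inord 2))) (Complex (c (inord 3)) (c (inord 2)))
     (Complex 0 (c (inord 4))).
Proof.
pose f := fun j : nat => c (inord j).
have -> : rcomb c (@bas5 R n Mk) = rcomb (fun k => f (val k)) (@bas5 R n Mk).
  by apply: eq_bigr => k _; rewrite /f inord_val.
rewrite /rcomb !big_ord_recl big_ord0 addr0 /= /rscale !mkZ !mkD /f.
congr mk; apply/eqP; rewrite eq_complex /=; apply/andP; split; apply/eqP; ring.
Qed.

Lemma rcomb4 (R : rcfType) (n : nat) (Mk : {set 'I_(2 ^ n)}) (c : 'I_4 -> R) :
  rcomb c (@bas4 R n Mk) = mk Mk (Complex 0 (c (inord 0))) (Complex 0 (c (inord 1)))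
     (Complex (- c (inord 3)) (c (inord 2))) (Complex (c (inord 3)) (c (inord 2))) 0.
Proof.
pose f := fun j : nat => c (inord j).
have -> : rcomb c (@bas4 R n Mk) = rcomb (fun k => f (val k)) (@bas4 R n Mk).
  by apply: eq_bigr => k _; rewrite /f inord_val.
rewrite /rcomb !big_ord_recl big_ord0 addr0 /= /rscale !mkZ !mkD /f.
congr mk; apply/eqP; rewrite eq_complex /=; apply/andP; split; apply/eqP; ring.
Qed.


Lemma imag0 (R : rcfType) (ar ai : R) : conjc (Complex ar ai) = - Complex ar ai -> ar = 0.
Proof. move/eqP; rewrite eq_complex /= => /andP[/eqP h _]; lra. Qed.

Theorem theorem5 (R : rcfType) (n : nat) (Mk : {set 'I_(2 ^ n)}) :
  (1 <= #|Mk|)%N -> (#|Mk| < 2 ^ n)%N ->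
  real_dim_eq (g_QWOA_Search R n Mk) (if #|Mk| == 1%N then 4%N else 5%N).
Proof.
move=> H1 H2.
have [x Hx] : exists x, x \in Mk by apply/card_gt0P.
have [z Hz] : exists z, z \notin Mk.
  have : (0 < #|~: Mk|)%N.
    move: (cardsC Mk) H2; rewrite card_ord; lia.
  by case/card_gt0P => z; rewrite inE => Hz; exists z.
case: eqP => Hm1.
- exists (@bas4 R n Mk); split.
  + case=> [[|[|[|[|j]]]] Hk]; rewrite /bas4 //=; [exact: gb0|exact: gb1|exact: gb2|exact: gX1].
  + move=> c; rewrite rcomb4 => H0 k.
    have [ha hb hc hd] := mk_zero H0 Hx Hz.
    rewrite addr0 in ha.
    have [_ h0] := cz ha; have [_ h1] := cz hb; have [h3 h2] := cz hc.
    move/eqP: h3; rewrite oppr_eq0 => /eqP h3.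
    rewrite -(inord_val k); case: k => [[|[|[|[|j]]]] Hk] //=.
  + move=> X /g_sub_S [a [b [cc [d [e [-> [Ha Hb He Hd]]]]]]].
    rewrite mk_m1 //; subst d.
    move: a b cc e Ha Hb He => [ar ai] [br bi] [cr ci] [er ei] Ha Hb He.
    have har := imag0 Ha; have hbr := imag0 Hb; have her := imag0 He.
    exists (fun k : 'I_4 => nth 0 [:: ai + ei; bi; ci; - cr] k).
    rewrite rcomb4 /= !inordK //=.
    congr mk; apply/eqP; rewrite eq_complex /=; apply/andP; split; apply/eqP;
      rewrite ?har ?hbr ?her; ring.
- have [x1 [x2 [hx1 hx2 hx12]]] : exists x y, [/\ x \in Mk, y \in Mk & x != y].
    apply/card_gt1P; move/eqP: Hm1; rewrite neq_ltn => /orP[h|//]; lia.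
  exists (@bas5 R n Mk); split.
  + case=> [[|[|[|[|[|j]]]]] Hk]; rewrite /bas5 //=;
      [exact: gb0|exact: gb1|exact: gb2|exact: gX1|exact: gP].
  + move=> c; rewrite rcomb5 => H0 k.
    have [ha hb hc hd] := mk_zero H0 Hx Hz.
    have ha0 := mk_zero2 H0 hx1 hx2 hx12.
    rewrite ha0 add0r in ha.
    have [_ h0] := cz ha0; have [_ h4] := cz ha; have [_ h1] := cz hb; have [h3 h2] := cz hc.
    move/eqP: h3; rewrite oppr_eq0 => /eqP h3.
    rewrite -(inord_val k); case: k => [[|[|[|[|[|j]]]]] Hk] //=.
  + move=> X /g_sub_S [a [b [cc [d [e [-> [Ha Hb He Hd]]]]]]].
    subst d.
    move: a b cc e Ha Hb He => [ar ai] [br bi] [cr ci] [er ei] Ha Hb He.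
    have har := imag0 Ha; have hbr := imag0 Hb; have her := imag0 He.
    exists (fun k : 'I_5 => nth 0 [:: ai; bi; ci; - cr; ei] k).
    rewrite rcomb5 /= !inordK //=.
    congr mk; apply/eqP; rewrite eq_complex /=; apply/andP; split; apply/eqP;
      rewrite ?har ?hbr ?her; ring.
Qed.
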